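(* Let $E(\boldsymbol x,\boldsymbol\theta)$, $\boldsymbol x\in\mathbb{R}^d$, $\boldsymbol\theta\in\mathbb{R}^n$, be an energy function with Boltzmann distribution $p_\mathrm{m}(\boldsymbol x,\boldsymbol\theta)=e^{-\beta E(\boldsymbol x,\boldsymbol\theta)}/Z(\boldsymbol\theta)$, $\beta>0$. Let $p_\mathrm{s}$ be the distribution of a system obeying the overdamped Langevin equation $\dot{\boldsymbol x}=-\mu\nabla_{\boldsymbol x}E(\boldsymbol x,\boldsymbol\theta(t))+\boldsymbol\xi$, initialized in equilibrium ($p_\mathrm{s}(\cdot,0)=p_\mathrm{m}(\cdot,\boldsymbol\theta(0))$). Let the parameters be driven slowly for a time $\tau$ according to $$\dot{\boldsymbol\theta}=-\boldsymbol\eta\,\nabla_{\boldsymbol\theta}\mathcal{L}_\mathrm{approx},\qquad \nabla_{\boldsymbol\theta}\mathcal{L}_\mathrm{approx}=\langle\nabla_{\boldsymbol\theta}E\rangle_{p_\mathrm{d}}-\langle\nabla_{\boldsymbol\theta}E\rangle_{p_\mathrm{s}},$$ such that for all $t\in[0,\tau)$ the slow-driving approximation holds in the form $$\nabla_{\boldsymbol\theta}\mathcal{L}_\mathrm{bias}=\langle\nabla_{\boldsymbol\theta}E\rangle_{p_\mathrm{s}}-\langle\nabla_{\boldsymbol\theta}E\rangle_{p_\mathrm{m}}=\boldsymbol\zeta(\boldsymbol\theta)\,\dot{\boldsymbol\theta},$$ where $\boldsymbol\zeta=\beta^{-1}(\boldsymbol\tau^\mathrm{r}\odot\boldsymbol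 g)$ is the thermodynamic metric. If the (matrix) learning rate follows the schedule $$\boldsymbol\eta^{-1}(\boldsymbol\theta,t)=\beta^{-1}\big(\tau-t+\boldsymbol\tau^\mathrm{r}(\boldsymbol\theta)\big)\odot\boldsymbol g(\boldsymbol\theta),$$ then for $t\in[0,\tau)$ $$\dot{\boldsymbol\theta}=-\frac{\beta}{\tau-t}\,\boldsymbol g^{-1}\,\nabla_{\boldsymbol\theta}\mathcal{L}_\mathrm{MLE},\qquad \nabla_{\boldsymbol\theta}\mathcal{L}_\mathrm{MLE}=\langle\nabla_{\boldsymbol\theta}E\rangle_{p_\mathrm{d}}-\langle\nabla_{\boldsymbol\theta}E\rangle_{p_\mathrm{m}},$$ which is a natural gradient flow.
   Context: $\langle f\rangle_p$ denotes expectation under density $p$; $p_\mathrm{d}$ is a fixed data distribution; $\mu>0$ is the mobility and $\boldsymbol\xi$ is white noise with mean zero and variance $2\mu\beta^{-1}$. $\mathcal{L}_\mathrm{MLE}=\langle-\beta^{-1}\log p_\mathrm{m}\rangle_{p_\mathrm{d}}$ is the (scaled) negative log-likelihood and $\mathcal{L}_\mathrm{bias}=\mathcal{L}_\mathrm{MLE}-\mathcal{L}_\mathrm{approx}$. $\boldsymbol g$ is the Fisher metric, $g_{ij}=\langle(\partial_{\theta_i}\log p_\mathrm{m})(\partial_{\theta_j}\log p_\mathrm{m})\rangle_{p_\mathrm{m}}$, assumed positive definite; $\boldsymbol\tau^\mathrm{r}(\boldsymbol\theta)$ is the $n\times n$ matrix of integral relaxation times (characteristic correlation times of the forces $\nabla_{\boldsymbol\theta}\log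 p_\mathrm{m}$), chosen so that $\boldsymbol\zeta$ is symmetric positive definite. $\odot$ is the Hadamard (entrywise) product, and in $\tau-t+\boldsymbol\tau^\mathrm{r}$ the scalar $\tau-t$ is added to every entry of $\boldsymbol\tau^\mathrm{r}$. *)

(* Defs.v *)
From HB Require Import structures.
From mathcomp Require Import all_boot all_order all_algebra.
From mathcomp Require Import all_classical all_reals all_analysis.
Set Implicit Arguments. Unset Strict Implicit. Unset Printing Implicit Defensive.
Import Order.TTheory GRing.Theory Num.Theory.
Import numFieldNormedType.Exports.
Local Open Scope classical_set_scope.
Local Open Scope ring_scope.

(* State space: an abstract measure space (X, mu) (R^d with Lebesgue measure
   is the instance of the paper); parameters theta are column vectors 'cV_n. *)

Definition pderiv (R : realType) (n : nat) (f : 'cV[R]_n -> R)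
    (th : 'cV[R]_n) (i : 'I_n) : R :=
  derive1 (fun h : R => f (th + h *: delta_mx i 0)) 0.

Definition gradE (R : realType) (X : Type) (n : nat)
    (E : X -> 'cV[R]_n -> R) (x : X) (th : 'cV[R]_n) : 'cV[R]_n :=
  \col_i pderiv (E x) th i.

Definition expect (d : measure_display) (X : measurableType d) (R : realType)
    (mu : {measure set X -> \bar R}) (p : X -> R) (f : X -> R) : R :=
  Rintegral mu setT (fun x => p x * f x).

Definition expectv (d : measure_display) (X : measurableType d) (R : realType)
    (n : nat) (mu : {measure set X -> \bar R}) (p : X -> R)
    (F : X -> 'cV[R]_n) : 'cV[R]_n :=
  \col_i expect mu p (fun x => F x i 0).

Definition partition (d : measure_display) (X : measurableType d) (R : realType)
    (n : nat) (mu : {measure set X -> \bar R}) (beta : R)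
    (E : X -> 'cV[R]_n -> R) (th : 'cV[R]_n) : R :=
  Rintegral mu setT (fun x => expR (- beta * E x th)).

Definition boltzmann (d : measure_display) (X : measurableType d) (R : realType)
    (n : nat) (mu : {measure set X -> \bar R}) (beta : R)
    (E : X -> 'cV[R]_n -> R) (th : 'cV[R]_n) (x : X) : R :=
  expR (- beta * E x th) / partition mu beta E th.

Definition fisher (d : measure_display) (X : measurableType d) (R : realType)
    (n : nat) (mu : {measure set X -> \bar R}) (beta : R)
    (E : X -> 'cV[R]_n -> R) (th : 'cV[R]_n) : 'M[R]_n :=
  \matrix_(i, j) expect mu (boltzmann mu beta E th)
     (fun x => pderiv (fun th' => ln (boltzmann mu beta E th' x)) th i *
               pderiv (fun th' => ln (boltzmann mu beta E th' x)) th j).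

Definition hadamard (R : pzRingType) (m n : nat) (A B : 'M[R]_(m, n)) : 'M[R]_(m, n) :=
  \matrix_(i, j) (A i j * B i j).

Definition posdef (R : realType) (n : nat) (A : 'M[R]_n) : Prop :=
  A^T = A /\ forall v : 'cV[R]_n, v != 0 -> 0 < (v^T *m A *m v) 0 0.

Definition vderiv (R : realType) (n : nat) (theta : R -> 'cV[R]_n) (t : R) : 'cV[R]_n :=
  \col_i derive1 (fun s : R => theta s i 0) t.

Definition thermo_metric (R : realType) (n : nat) (beta : R) (taur g : 'M[R]_n) : 'M[R]_n :=
  beta^-1 *: hadamard taur g.

Definition eta_inv_schedule (R : realType) (n : nat) (beta tau t : R)
    (taur g : 'M[R]_n) : 'M[R]_n :=
  beta^-1 *: hadamard (const_mx (tau - t) + taur) g.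

(* Main.v *)
Require Import Defs.
From HB Require Import structures.
From mathcomp Require Import all_boot all_order all_algebra.
From mathcomp Require Import all_classical all_reals all_analysis.
From mathcomp Require Import ring lra.
Import Order.TTheory GRing.Theory Num.Theory.
Import numFieldNormedType.Exports.
Local Open Scope classical_set_scope.
Local Open Scope ring_scope.

Theorem theorem1 (R : realType) (d : measure_display) (X : measurableType d)
    (mu : {measure set X -> \bar R}) (n : nat)
    (E : X -> 'cV[R]_n -> R) (beta tau : R)
    (pd : X -> R) (ps : R -> X -> R)
    (theta : R -> 'cV[R]_n)
    (taur : 'cV[R]_n -> 'M[R]_n)
    (eta : 'cV[R]_n -> R -> 'M[R]_n) :
  let pm := boltzmann mu beta E in
  let g := fisher mu beta E in
  let zeta := fun th => thermo_metric beta (taur th) (g th) in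
  let avg := fun (p : X -> R) th => expectv mu p (fun x => gradE E x th) in
  0 < beta ->
  (* Fisher metric positive definite, tau^r chosen so that zeta is s.p.d. *)
  (forall th, posdef (g th)) ->
  (forall th, posdef (zeta th)) ->
  (* initialization in equilibrium *)
  ps 0 = pm (theta 0) ->
  (* learning-rate schedule *)
  (forall th t, 0 <= t < tau ->
     eta th t \in unitmx /\
     invmx (eta th t) = eta_inv_schedule beta tau t (taur th) (g th)) ->
  (forall t, 0 <= t < tau ->
     (forall i : 'I_n, derivable (fun s => theta s i 0) t 1)) ->
  (* learning dynamics thetadot = - eta grad L_approx *)
  (forall t, 0 <= t < tau ->
     vderiv theta t =
       - (eta (theta t) t *m (avg pd (theta t) - avg (ps t) (theta t)))) ->
  (* slow-driving approximation grad L_bias = zeta thetadot *)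
  (forall t, 0 <= t < tau ->
     avg (ps t) (theta t) - avg (pm (theta t)) (theta t) =
       zeta (theta t) *m vderiv theta t) ->
  forall t, 0 <= t < tau ->
    vderiv theta t =
      - ((beta / (tau - t)) *: (invmx (g (theta t))
            *m (avg pd (theta t) - avg (pm (theta t)) (theta t)))).
Proof.
move=> pm g zeta avg hb gpd zpd _ hsched _ hdyn hslow t ht.
have gunit : g (theta t) \in unitmx.
  rewrite unitmxE unitfE; apply/negP => /eqP/eqP/det0P [v vn0 hv].
  have := (gpd (theta t)).2 (v^T).
  rewrite trmx_eq0 vn0 trmxK => /(_ isT).
  by rewrite hv mul0mx mxE ltxx.
have [eu einv] := hsched (theta t) t ht.
have hd := hdyn t ht; have hs := hslow t ht.
set v := vderiv theta t in hd hs *.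
set a := avg pd (theta t) in hd *.
set s := avg (ps t) (theta t) in hd hs.
set m := avg (pm (theta t)) (theta t) in hs *.
have h1 : a - s = - (invmx (eta (theta t) t) *m v).
  by rewrite hd mulmxN mulKmx // opprK.
have hh : hadamard (const_mx (tau - t) + taur (theta t)) (g (theta t)) =
   (tau - t) *: g (theta t) + hadamard (taur (theta t)) (g (theta t)).
  by apply/matrixP => i j; rewrite !mxE mulrDl.
have h2 : a - m = - ((beta^-1 * (tau - t)) *: (g (theta t) *m v)).
  have -> : a - m = (a - s) + (s - m) by rewrite addrA subrK.
  rewrite h1 hs einv /eta_inv_schedule hh /zeta /thermo_metric.
  rewrite scalerDr mulmxDl scalerA -scalemxAl.
  by rewrite opprD -addrA addNr addr0.
have ht0 : tau - t != 0 by rewrite subr_eq0 gt_eqF //; case/andP: ht.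
have hb0 : beta != 0 by rewrite gt_eqF.
have h3 : g (theta t) *m v = - ((beta / (tau - t)) *: (a - m)).
  rewrite h2 scalerN opprK scalerA.
  have -> : beta / (tau - t) * (beta^-1 * (tau - t)) = 1.
    by rewrite mulrACA mulfV // mulVf // mulr1.
  by rewrite scale1r.
by rewrite -(mulKmx gunit v) h3 mulmxN scalemxAr.
Qed.
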